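(* Let $B$ be a supersoluble brace. If $B$ is left-nilpotent and $\operatorname{Ker}(\lambda)\le Z_n(B,\cdot)$ for some $n\in\mathbb{N}$, then $(B,\cdot)$ is nilpotent.
   Context: A brace (skew left brace) is a set $B$ with two binary operations $+$ and $\cdot$ such that $(B,+)$ and $(B,\cdot)$ are groups and $a(b+c)=ab-a+ac$ for all $a,b,c\in B$. $\lambda_a(b)=-a+ab$ defines a homomorphism $\lambda\colon(B,\cdot)\to\operatorname{Aut}(B,+)$; $a*b=-a+ab-b$; for subsets $X,Y$, $X*Y$ is the subgroup of $(B,+)$ generated by all $x*y$, $x\in X,y\in Y$. $B$ is left-nilpotent if, with $L_0=B$ and $L_{k+1}=B*L_k$, one has $L_m=\{0\}$ for some $m$. $Z_n(B,\cdot)$ is the $n$-th term of the upper central series of the group $(B,\cdot)$. An ideal is a subset that is a subgroup of both groups, normal in both, and invariant under all $\lambda_b$; quotients by ideals are braces. $\operatorname{Soc}(B)=\operatorname{Ker}\lambda\cap Z(B,+)$. $B$ is supersoluble if there is a finite chain of ideals $\{0\}=I_0\le\dots\le I_n=B$ such that for each $i$, either $(I_{i+1}/I_i,+)$ is infinite cyclic and $I_{i+1}/I_i\le\operatorname{Soc}(B/I_i)$, or $I_{i+1}/I_i$ has prime order. *)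

(* Defs.v *)
From mathcomp Require Import all_boot all_algebra.
Set Implicit Arguments. Unset Strict Implicit. Unset Printing Implicit Defensive.

(** A (skew left) brace: (B,+) and (B,.) are groups (not necessarily abelian)
    and a(b+c) = ab - a + ac.  The two identities are kept as separate data. *)
Record brace := Brace {
  car :> Type;
  badd : car -> car -> car;
  bopp : car -> car;
  bzero : car;
  bmul : car -> car -> car;
  binv : car -> car;
  bone : car;
  baddA : forall a b c, badd a (badd b c) = badd (badd a b) c;
  badd0r : forall a, badd a bzero = a;
  badd0l : forall a, badd bzero a = a;
  baddNr : forall a, badd a (bopp a) = bzero;
  baddNl : forall a, badd (bopp a) a = bzero;
  bmulA : forall a b c, bmul a (bmul b c) = bmul (bmul a b) c;
  bmul1r : forall a, bmul a bone = a;
  bmul1l : forall a, bmul bone a = a;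
  bmulVr : forall a, bmul a (binv a) = bone;
  bmulVl : forall a, bmul (binv a) a = bone;
  bbrace : forall a b c,
      bmul a (badd b c) = badd (badd (bmul a b) (bopp a)) (bmul a c)
}.

Section BraceDefs.
Variable B : brace.
Local Notation "x + y" := (badd x y).
Local Notation "- x" := (bopp x).
Local Notation "x * y" := (bmul x y).

Definition blambda (a b : B) : B := - a + a * b.
Definition bstar (a b : B) : B := (- a + a * b) + - b.

Inductive gen_add (S : B -> Prop) : B -> Prop :=
| gen_add0 : gen_add S (bzero B)
| gen_add_in x : S x -> gen_add S x
| gen_addN x : gen_add S x -> gen_add S (- x)
| gen_addD x y : gen_add S x -> gen_add S y -> gen_add S (x + y).

Definition star_set (X Y : B -> Prop) : B -> Prop :=
  gen_add (fun z => exists x y, X x /\ Y y /\ z = bstar x y).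

Fixpoint lseries (k : nat) : B -> Prop :=
  match k with
  | 0 => fun _ => True
  | k'.+1 => star_set (fun _ => True) (lseries k')
  end.

Definition left_nilpotent : Prop :=
  exists m, forall x, lseries m x <-> x = bzero B.

Definition bcomm (x y : B) : B := binv x * binv y * x * y.

(** upper central series of (B,.): Z_0 = 1, Z_{n+1}/Z_n = Z(B/Z_n) *)
Fixpoint zcent (n : nat) : B -> Prop :=
  match n with
  | 0 => fun x => x = bone B
  | n'.+1 => fun x => forall y, zcent n' (bcomm x y)
  end.

Definition mul_nilpotent : Prop := exists c, forall x, zcent c x.

Definition ker_lambda (a : B) : Prop := forall b, blambda a b = b.

Definition is_ideal (I : B -> Prop) : Prop :=
  I (bzero B) /\
  (forall x y, I x -> I y -> I (x + y)) /\
  (forall x, I x -> I (- x)) /\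
  I (bone B) /\
  (forall x y, I x -> I y -> I (x * y)) /\
  (forall x, I x -> I (binv x)) /\
  (forall a x, I x -> I ((a + x) + - a)) /\
  (forall a x, I x -> I ((a * x) * binv a)) /\
  (forall b x, I x -> I (blambda b x)).

Definition zmul (g : B) (k : int) : B :=
  match k with
  | Posz n => iter n (badd g) (bzero B)
  | Negz n => - iter n.+1 (badd g) (bzero B)
  end.

(** Conditions on the factor J/I (I <= J ideals), written in B:
    x + I = y + I  iff  I (-y + x). *)

(* J/I <= Soc(B/I): lambda_{xI} = id on B/I and xI central in (B/I,+) *)
Definition factor_in_socle (I J : B -> Prop) : Prop :=
  forall x, J x -> forall y,
    I (blambda x y + - y) /\ I (((x + y) + - x) + - y).

Definition factor_inf_cyclic (I J : B -> Prop) : Prop :=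
  (exists g, J g /\ forall x, J x -> exists k : int, I (- zmul g k + x)) /\
  ~ (exists (n : nat) (f : 'I_n -> B),
        forall x, J x -> exists i, I (- f i + x)).

Definition factor_prime_order (I J : B -> Prop) : Prop :=
  exists p, prime p /\
    exists f : 'I_p -> B,
      [/\ forall i, J (f i),
          forall i j, I (- f i + f j) -> i = j &
          forall x, J x -> exists i, I (- f i + x)].

Definition supersoluble : Prop :=
  exists (n : nat) (I : nat -> B -> Prop),
    [/\ forall x, I 0 x <-> x = bzero B,
        forall x, I n x,
        forall i, i <= n -> is_ideal (I i),
        forall i x, i < n -> I i x -> I i.+1 x &
        forall i, i < n ->
          (factor_inf_cyclic (I i) (I i.+1) /\ factor_in_socle (I i) (I i.+1))
          \/ factor_prime_order (I i) (I i.+1)].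

End BraceDefs.

(* Main.v *)
From HB Require Import structures.
Require Import Defs.
From mathcomp Require Import all_boot all_algebra all_fingroup.
From mathcomp Require Import zify.
From Stdlib Require Import Classical ClassicalEpsilon.
Set Implicit Arguments. Unset Strict Implicit. Unset Printing Implicit Defensive.

Lemma int_unit (c d : int) : (c * d = 1)%R -> c = 1%R \/ c = (-1)%R.
Proof. move=> h.
have : c \is a intUnitRing.unitz by apply: (@intUnitRing.unitzPl c d); rewrite GRing.mulrC.
by rewrite qualifE /= => /orP[/eqP->|/eqP->]; [left|right].
Qed.

Section Basic.
Variable B : brace.
Local Notation "x + y" := (badd x y).
Local Notation "- x" := (bopp x).
Local Notation "x * y" := (bmul x y).
Local Notation "0" := (bzero B).

Lemma addA' (a b c : B) : (a + b) + c = a + (b + c).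
Proof. by rewrite baddA. Qed.
Lemma addKl (a b : B) : - a + (a + b) = b.
Proof. by rewrite baddA baddNl badd0l. Qed.
Lemma addNKl (a b : B) : a + (- a + b) = b.
Proof. by rewrite baddA baddNr badd0l. Qed.
Lemma opp0 : - (0) = 0 :> B.
Proof. by rewrite -{2}(baddNr 0) badd0l. Qed.
Lemma oppK (a : B) : - - a = a.
Proof. by rewrite -(badd0r (- - a)) -(baddNl a) baddA baddNl badd0l. Qed.
Lemma opp_uniq (a b : B) : a + b = 0 -> b = - a.
Proof. by move=> h; rewrite -(addKl a b) h badd0r. Qed.
Lemma oppD (a b : B) : - (a + b) = - b + - a.
Proof.
by apply/esym/opp_uniq; rewrite addA' addNKl baddNr.
Qed.
Lemma add_eq_l (a b c : B) : a + b = c -> b = - a + c.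
Proof. by move<-; rewrite addKl. Qed.
Lemma addrNK' (a b : B) : (a + - b) + b = a.
Proof. by rewrite addA' baddNl badd0r. Qed.
Lemma addrKN' (a b : B) : (a + b) + - b = a.
Proof. by rewrite addA' baddNr badd0r. Qed.

Lemma mul0r (a : B) : a * 0 = a.
Proof.
have := bbrace a 0 0; rewrite badd0l => h.
have h2 : a * 0 + - a = 0 by rewrite -(addrKN' (a*0 + -a) (a*0)) -h baddNr.
by rewrite -[RHS]oppK (opp_uniq h2) oppK.
Qed.
Lemma zero_one : 0 = bone B.
Proof. by rewrite -(mul0r (bone B)) bmul1l. Qed.

Definition lam (a x : B) := blambda a x.
Lemma lamD (a x y : B) : blambda a (x + y) = blambda a x + blambda a y.
Proof. by rewrite /blambda bbrace !addA'. Qed.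
Lemma lam0 (a : B) : blambda a 0 = 0.
Proof. by rewrite /blambda mul0r baddNl. Qed.
Lemma lamN (a x : B) : blambda a (- x) = - blambda a x.
Proof. by apply: opp_uniq; rewrite -lamD baddNr lam0. Qed.
Lemma lam1 (x : B) : blambda (bone B) x = x.
Proof. by rewrite /blambda bmul1l -zero_one opp0 badd0l. Qed.
Lemma mulN (a b : B) : a * (- b) = a + - (a * b) + a.
Proof.
have := bbrace a b (- b); rewrite baddNr mul0r => h.
by rewrite (add_eq_l (esym h)) oppD oppK.
Qed.
Lemma lamM (a b x : B) : blambda (a * b) x = blambda a (blambda b x).
Proof.
by rewrite /blambda bbrace mulN bmulA !addA' addKl addNKl.
Qed.
Lemma lamV (a x : B) : blambda (binv a) (blambda a x) = x.
Proof. by rewrite -lamM bmulVl lam1. Qed.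
Lemma lamV' (a x : B) : blambda a (blambda (binv a) x) = x.
Proof. by rewrite -lamM bmulVr lam1. Qed.
End Basic.
Section Cong.
Variable B : brace.
Local Notation "x + y" := (badd x y).
Local Notation "- x" := (bopp x).
Local Notation "x * y" := (bmul x y).
Local Notation "0" := (bzero B).

Definition nsub (N : B -> Prop) :=
  [/\ N 0, (forall x y, N x -> N y -> N (x + y)), (forall x, N x -> N (- x)) &
      (forall a x, N x -> N ((a + x) + - a))].
Definition cg (N : B -> Prop) (x y : B) := N (- x + y).

Variable N : B -> Prop.
Hypothesis hN : nsub N.

Lemma N0 : N 0. Proof. by case: hN. Qed.
Lemma ND x y : N x -> N y -> N (x + y). Proof. by case: hN => _ h _ _; apply: h. Qed.
Lemma NN x : N x -> N (- x). Proof. by case: hN => _ _ h _; apply: h. Qed.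
Lemma Nconj a x : N x -> N ((a + x) + - a). Proof. by case: hN => _ _ _ h; apply: h. Qed.
Lemma Nconj' a x : N x -> N ((- a + x) + a).
Proof. by move=> /(Nconj (- a)); rewrite oppK. Qed.

Lemma cg_refl x : cg N x x. Proof. by rewrite /cg baddNl; apply: N0. Qed.
Lemma cg_sym x y : cg N x y -> cg N y x.
Proof. by rewrite /cg => /NN; rewrite oppD oppK. Qed.
Lemma cg_trans x y z : cg N x y -> cg N y z -> cg N x z.
Proof. by rewrite /cg => h1 h2; have := ND h1 h2; rewrite addA' addNKl. Qed.
Lemma cgDl a x y : cg N x y -> cg N (a + x) (a + y).
Proof. by rewrite /cg oppD addA' addKl. Qed.
Lemma cgDr a x y : cg N x y -> cg N (x + a) (y + a).
Proof. by rewrite /cg oppD => /(Nconj' a); rewrite !addA'. Qed.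
Lemma cgD x x' y y' : cg N x x' -> cg N y y' -> cg N (x + y) (x' + y').
Proof. move=> h1 h2; apply: cg_trans (cgDr y h1) (cgDl x' h2). Qed.
Lemma cgN x y : cg N x y -> cg N (- x) (- y).
Proof.
rewrite /cg oppK => h; have := Nconj x (NN h).
by rewrite oppD oppK !addA' baddNr badd0r.
Qed.
Lemma cg_lam b x y : (forall c z, N z -> N (blambda c z)) ->
  cg N x y -> cg N (blambda b x) (blambda b y).
Proof. by rewrite /cg => hl /(hl b); rewrite lamD lamN. Qed.
Lemma cg0 z : cg N 0 z <-> N z.
Proof. by rewrite /cg opp0 badd0l. Qed.
Lemma cgR x y : cg N x y <-> N (y + - x).
Proof.
rewrite /cg; split=> h.
  by have := Nconj y h; rewrite !addA' baddNr badd0r.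
by have := Nconj' x h; rewrite !addA' baddNl badd0r.
Qed.
Lemma cg_addN x z : N z -> cg N x (x + z).
Proof. by rewrite /cg addKl. Qed.
End Cong.
Section Kal.
Variable B : brace.
Local Notation "x + y" := (badd x y).
Local Notation "- x" := (bopp x).
Local Notation "x * y" := (bmul x y).
Local Notation "0" := (bzero B).

Definition linv (N : B -> Prop) := forall c z, N z -> N (blambda c z).

Lemma lemH (N M : B -> Prop) (a : B) : nsub N -> linv N -> nsub M ->
  (forall m, M m -> cg N m (blambda a m)) ->
  forall x y, M y -> cg N ((- x + blambda a x) + y) (y + (- x + blambda a x)).
Proof.
move=> hN hlN hM hA x y My.
have Mz : M ((x + y) + - x) by apply: Nconj.
have h1 := hA _ Mz.
rewrite lamD lamN lamD in h1.
have h2 : cg N ((blambda a x + y) + - blambda a x) ((blambda a x + blambda a y) + - blambda a x).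
  by apply: cgDr => //; apply: cgDl => //; apply: hA.
have h3 := cg_trans hN h1 (cg_sym hN h2).
have h4 := cgDr hN (blambda a x) (cgDl (- x) h3).
move: h4; rewrite !addA' addKl baddNl badd0r => h4.
by apply: cg_sym.
Qed.

Variable I : nat -> B -> Prop.
Variable n : nat.
Hypothesis hI : forall i, i <= n -> nsub (I i) /\ linv (I i).

Definition Aj j (b : B) := forall i, i + j <= n -> forall x, I (i + j) x ->
  cg (I i) x (blambda b x).

Lemma comm_step j a b : Aj j a -> Aj 1 b -> Aj (j + 1) (bcomm a b).
Proof.
move=> ha hb i hij x Ix.
have [hN hlN] : nsub (I i) /\ linv (I i) by apply: hI; apply: leq_trans hij; apply: leq_addr.
have [hM _] : nsub (I (i + j)) /\ linv (I (i + j)).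
  by apply: hI; apply: leq_trans hij; rewrite addnA leq_addr.
set d := - x + blambda a x.
set e := - x + blambda b x.
have he : I (i + j) e.
  have h1 : (i + j) + 1 <= n by rewrite -addnA.
  have h2 : I ((i + j) + 1) x by rewrite -addnA.
  exact: (hb _ h1 _ h2).
have hd : I (i + 1) d.
  have h1 : (i + 1) + j <= n by rewrite -addnA (addnC 1).
  have h2 : I ((i + 1) + j) x by rewrite -addnA (addnC 1).
  exact: (ha _ h1 _ h2).
have hae : cg (I i) e (blambda a e) by apply: ha => //; apply: leq_trans hij; rewrite addnA leq_addr.
have hbd : cg (I i) d (blambda b d) by apply: hb => //; apply: leq_trans hij; rewrite leq_add2l leq_addl.
have hH := lemH hN hlN hM (ha i (leq_trans (leq_addr _ _) (leq_trans (eq_leq (esym (addnA i j 1))) hij))) x he.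
have Ex : blambda a x = x + d by rewrite /d addNKl.
have Ey : blambda b x = x + e by rewrite /e addNKl.
move: hH; rewrite -/d => hH; clearbody d e.
have k1 : blambda a (blambda b x) = (x + d) + blambda a e by rewrite Ey lamD Ex.
have k2 : blambda b (blambda a x) = (x + e) + blambda b d by rewrite Ex lamD Ey.
have k3 : cg (I i) (blambda b (blambda a x)) (blambda a (blambda b x)).
  rewrite k1 k2.
  apply: (cg_trans hN (cgDl _ (cg_sym hN hbd))).
  apply: (cg_trans hN _ (cgDl _ hae)).
  rewrite !addA'; apply: cgDl; exact: (cg_sym hN hH).
have := cg_lam (binv a) hlN (cg_lam (binv b) hlN k3).
by rewrite lamV lamV /bcomm !lamM.
Qed.
End Kal.
Section Chain.
Variable B : brace.
Local Notation "x + y" := (badd x y).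
Local Notation "- x" := (bopp x).
Local Notation "x * y" := (bmul x y).
Local Notation "0" := (bzero B).

Lemma iter_lseries (b z : B) k : lseries k (iter k (bstar b) z).
Proof.
elim: k => [//|k IH] /=.
apply: gen_add_in; exists b, (iter k (bstar b) z); split=> //.
Qed.

Lemma chain (I J : B -> Prop) (b : B) : left_nilpotent B -> nsub I -> linv I ->
  (forall z, J z -> J (bstar b z)) ->
  (forall z, J z -> cg I z (blambda b z) -> I z) ->
  forall z, J z -> cg I z (blambda b z).
Proof.
move=> [m hm] hN hl hJ hK z Jz.
suff Iz : I z by rewrite /cg; apply: ND => //; [apply: NN | apply: hl].
apply: NNPP => nIz.
have H : forall k, J (iter k (bstar b) z) /\ ~ I (iter k (bstar b) z).
  elim=> [//|k [Jk nIk]] /=; split; first by apply: hJ.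
  move=> Ik; apply: nIk; apply: hK => //; apply/cgR => //.
have [_ H2] := H m; apply: H2.
by have /hm -> := iter_lseries b z m; apply: N0.
Qed.

Lemma ideal_nsub (I : B -> Prop) : is_ideal I -> nsub I /\ linv I.
Proof.
by case=> [h0 [hD [hN [_ [_ [_ [hc [_ hl]]]]]]]]; split => //; split.
Qed.

Theorem assembly (n : nat) (I : nat -> B -> Prop) (N : nat) :
  (forall x, I 0%N x <-> x = 0) -> (forall x, I n x) ->
  (forall i, i <= n -> is_ideal (I i)) ->
  (forall b, Aj I n 1 b) ->
  (forall a : B, ker_lambda a -> zcent N a) ->
  mul_nilpotent B.
Proof.
move=> h0 hn hid hA1 hker.
have hI : forall i, i <= n -> nsub (I i) /\ linv (I i) by move=> i /hid /ideal_nsub.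
have A0 : forall b, Aj I n 0 b.
  move=> b i; rewrite addn0 => hi x Ix.
  have [hN hl] := hI i hi.
  by rewrite /cg; apply: ND => //; [apply: NN | apply: hl].
have claim : forall a, a <= n -> forall x, Aj I n (n - a) x -> zcent (a + N) x.
  elim=> [|a IH] ha x hx.
    rewrite subn0 in hx; apply: hker => y.
    have := hx 0%N (leqnn _) y (hn y); rewrite /cg => /h0 e.
    by rewrite -(addNKl y (blambda x y)) e badd0r.
  rewrite addSn /= => y; apply: IH; first by apply: ltnW.
  have := comm_step hI hx (hA1 y).
  by rewrite addn1 subnSK.
exists (n + N)%N; move=> x; apply: claim => //; rewrite subnn; apply: A0.
Qed.
End Chain.
Section Prime.
Variable B : brace.
Local Notation "x + y" := (badd x y).
Local Notation "- x" := (bopp x).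
Local Notation "0" := (bzero B).
Variables (I J : B -> Prop) (hI : nsub I) (hJ : nsub J) (IJ : forall x, I x -> J x).
Variables (p : nat) (pp : prime p) (f : 'I_p -> B).
Hypotheses (fJ : forall i, J (f i)) (finj : forall i j, I (- f i + f j) -> i = j)
  (fcov : forall x, J x -> exists i, I (- f i + x)).

Definition i0 : 'I_p := Ordinal (prime_gt0 pp).
Definition idx (z : B) : 'I_p := epsilon (inhabits i0) (fun i => I (- f i + z)).
Lemma idxP z : J z -> cg I (f (idx z)) z.
Proof. by move=> /fcov [i hi]; apply: (epsilon_spec (inhabits i0) (fun i => I (- f i + z))); exists i. Qed.
Lemma idx_eq z z' : J z -> J z' -> cg I z z' -> idx z = idx z'.
Proof.
move=> Jz Jz' h; apply: finj.
exact: (cg_trans hI (cg_trans hI (idxP Jz) h) (cg_sym hI (idxP Jz'))).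
Qed.
Lemma idx_f i : idx (f i) = i.
Proof. by apply: finj; apply: (idxP (fJ i)). Qed.

Definition Q : Type := 'I_p.
HB.instance Definition _ := Finite.on Q.
Definition qmul (i j : Q) : Q := idx (f i + f j).
Definition qone : Q := idx 0.
Definition qinv (i : Q) : Q := idx (- f i).
Lemma qmulA : associative qmul.
Proof.
move=> i j k; rewrite /qmul; apply: idx_eq; try by apply: ND => //; apply: fJ.
apply: (cg_sym hI).
apply: (cg_trans hI (cgDr hI _ (idxP (ND hJ (fJ i) (fJ j))))).
rewrite addA'; apply: cgDl; apply: (cg_sym hI); apply: idxP; apply: ND => //; apply: fJ.
Qed.
Lemma qmul1 : left_id qone qmul.
Proof.
move=> i; rewrite /qmul /qone -{2}(idx_f i); apply: idx_eq.
- by apply: (ND hJ); apply: fJ.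
- by apply: fJ.
have := cgDr hI (f i) (idxP (N0 hJ)); by rewrite badd0l.
Qed.
Lemma qmulV : left_inverse qone qinv qmul.
Proof.
move=> i; rewrite /qmul /qone /qinv; apply: idx_eq.
- by apply: ND => //; apply: fJ.
- by apply: N0.
have := cgDr hI (f i) (idxP (NN hJ (fJ i))); by rewrite baddNl.
Qed.
HB.instance Definition _ := Finite_isGroup.Build Q qmulA qmul1 qmulV.

Lemma prime_dich (K : B -> Prop) : K 0 -> (forall x y, K x -> K y -> K (x + y)) ->
  (forall x, I x -> K x) ->
  (forall z, J z -> K z) \/ (forall z, J z -> K z -> I z).
Proof.
move=> K0 KD IK.
have Kcg : forall z z', K z -> cg I z z' -> K z'.
  move=> z z' Kz h; rewrite -(addNKl z z'); apply: KD => //; exact: IK.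
pose Kb (i : Q) : bool := if excluded_middle_informative (K (f i)) then true else false.
have KbP : forall i, Kb i <-> K (f i).
  by move=> i; rewrite /Kb; case: excluded_middle_informative.
pose Ks := [set i : Q | Kb i].
have Ksg : group_set Ks.
  apply/group_setP; split.
    rewrite inE; apply/KbP; apply: (Kcg 0); first by apply: K0.
    by apply: (cg_sym hI); apply: idxP; apply: N0.
  move=> i j; rewrite !inE => /KbP hi /KbP hj; apply/KbP.
  apply: (Kcg (f i + f j)); first by apply: KD.
  by apply: (cg_sym hI); apply: idxP; apply: ND => //; apply: fJ.
pose G := Group Ksg.
have hdiv : #|Ks| %| p.
  by have := cardSg (subsetT G); rewrite cardsT card_ord.
have inKs : forall z, J z -> K z -> idx z \in Ks.
  move=> z Jz Kz; rewrite inE; apply/KbP; apply: (Kcg z) => //.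
  by apply: (cg_sym hI); apply: idxP.
case: (eqVneq #|Ks| 1%N) => [h1|hn1].
  right=> z Jz Kz.
  have one_in : (qone : Q) \in Ks by have := group1 G; rewrite /=.
  have /cards1P [x0 Ex] : #|Ks| == 1%N by apply/eqP.
  have e1 : idx z = qone.
    have := inKs z Jz Kz; have := one_in; rewrite Ex !inE => /eqP -> /eqP ->. done.
  apply/cg0 => //; apply: (cg_trans hI (cg_sym hI (idxP (N0 hJ)))).
  rewrite -/qone -e1; exact: idxP.
left=> z Jz; have hp := (prime_nt_dvdP pp hn1 hdiv).
have hT : Ks = [set: Q].
  by apply/eqP; rewrite eqEcard subsetT cardsT card_ord hp leqnn.
have : idx z \in Ks by rewrite hT inE.
rewrite inE => /KbP h; apply: (Kcg _ _ h); exact: idxP.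
Qed.
End Prime.
Section Zm.
Variable B : brace.
Local Open Scope ring_scope.
Import GRing.Theory.
Variable I : B -> Prop.
Hypotheses (hI : nsub I) (hlI : linv I).

Lemma iterS' (g : B) n : iter n.+1 (badd g) (bzero B) = badd (iter n (badd g) (bzero B)) g.
Proof.
elim: n => [|n IH]; first by rewrite /= badd0r badd0l.
have -> : iter n.+2 (badd g) (bzero B) = badd g (iter n.+1 (badd g) (bzero B)) by [].
by rewrite [in LHS]IH baddA.
Qed.
Lemma zN (g : B) (n : nat) : zmul g (- (n%:Z)) = bopp (iter n (badd g) (bzero B)).
Proof. case: n => [|n]; first by rewrite /= opp0. by []. Qed.
Lemma zS (g : B) k : zmul g (k + 1) = badd (zmul g k) g.
Proof.
case: k => n.
  by rewrite -PoszD addn1 /= -iterS'.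
have -> : Negz n + 1 = - (n%:Z) by rewrite NegzE; lia.
by rewrite zN /= oppD addA' baddNl badd0r.
Qed.
Lemma zP (g : B) k : zmul g (k - 1) = badd (zmul g k) (bopp g).
Proof. by rewrite -{2}(subrK 1 k) zS addrKN'. Qed.
Lemma zD (g : B) a b : zmul g (a + b) = badd (zmul g a) (zmul g b).
Proof.
elim/int_rect: b => [|n IH|n IH].
- by rewrite addr0 /= badd0r.
- by rewrite -addn1 PoszD addrA !zS IH addA'.
- by rewrite -addn1 PoszD opprD addrA !zP IH addA'.
Qed.
Lemma z0 (g : B) : zmul g 0 = bzero B. Proof. by []. Qed.
Lemma zNN (g : B) a : zmul g (- a) = bopp (zmul g a).
Proof. by apply: opp_uniq; rewrite -zD subrr. Qed.
Lemma zB (g : B) a c : zmul g (c - a) = badd (zmul g c) (bopp (zmul g a)).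
Proof. by rewrite zD zNN. Qed.
Lemma zM (g : B) a b : zmul (zmul g a) b = zmul g (a * b).
Proof.
elim/int_rect: b => [|n IH|n IH].
- by rewrite mulr0.
- by rewrite -addn1 PoszD zS IH mulrDr mulr1 zD.
- by rewrite -addn1 PoszD opprD zP IH mulrDr mulrN1 zB.
Qed.
Lemma z1 (g : B) : zmul g 1 = g. Proof. by rewrite /= badd0r. Qed.
Lemma zlam (b y : B) k : blambda b (zmul y k) = zmul (blambda b y) k.
Proof.
have hp : forall n, blambda b (iter n (badd y) (bzero B)) = iter n (badd (blambda b y)) (bzero B).
  by elim=> [|n IH] /=; [rewrite lam0 | rewrite lamD IH].
by case: k => n; rewrite /zmul ?lamN hp.
Qed.
Lemma zI (y : B) k : I y -> I (zmul y k).
Proof.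
move=> Iy.
have hp : forall n, I (iter n (badd y) (bzero B)).
  by elim=> [|n IH] /=; [apply: (N0 hI) | apply: (ND hI)].
by case: k => n; rewrite /zmul; [apply: hp | apply: (NN hI); apply: hp].
Qed.
Lemma zcg (y y' : B) k : cg I y y' -> cg I (zmul y k) (zmul y' k).
Proof.
move=> h.
have hp : forall n, cg I (iter n (badd y) (bzero B)) (iter n (badd y') (bzero B)).
  by elim=> [|n IH] /=; [apply: (cg_refl hI) | apply: (cgD hI)].
by case: k => n; rewrite /zmul; [apply: hp | apply: (cgN hI); apply: hp].
Qed.

Lemma tfree (J : B -> Prop) (g : B) :
  (forall x, J x -> exists k : int, I (badd (bopp (zmul g k)) x)) ->
  ~ (exists (n : nat) (f : 'I_n -> B), forall x, J x -> exists i, I (badd (bopp (f i)) x)) ->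
  forall d, I (zmul g d) -> d = 0.
Proof.
move=> gen nfin d Id; apply: NNPP => dn0; apply: nfin.
have dn0' : d != 0 by apply/eqP.
exists `|d|%N, (fun i : 'I_`|d|%N => zmul g (i%:Z)) => x Jx.
have [k hk] := gen x Jx.
set r := (k %% d)%Z; set q := (k %/ d)%Z.
have r0 : 0 <= r by apply: modz_ge0.
have rl : r < `|d|%:Z by rewrite abszE; apply: ltz_mod.
have rl' : (`|r| < `|d|)%N by lia.
exists (Ordinal rl').
have er : (`|r|%N)%:Z = r by lia.
change (I (badd (bopp (zmul g ((`|r|%N)%:Z))) x)); rewrite er.
have ek : zmul g k = badd (zmul (zmul g d) q) (zmul g r).
  by rewrite zM -zD mulrC -divz_eq.
have h1 : cg I (zmul g r) (zmul g k).
  rewrite ek /cg baddA; apply: (Nconj' hI); exact: zI.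
exact: (cg_trans hI h1 hk).
Qed.

Lemma cyc_dich (J : B -> Prop) (b : B) : nsub J -> linv J ->
  factor_inf_cyclic I J ->
  (forall z, J z -> cg I z (blambda b z)) \/ (forall z, J z -> cg I z (blambda b z) -> I z).
Proof.
move=> hJ hlJ [[g [Jg gen]] nfin].
have tf := tfree gen nfin.
have eqz : forall a c, cg I (zmul g a) (zmul g c) -> a = c.
  move=> a c; rewrite /cg -zNN -zD => /tf h.
  have h' : c - a = 0 by rewrite addrC.
  by apply/eqP; rewrite eq_sym -subr_eq0 h'.
have [c hc] := gen _ (hlJ b g Jg).
have [c' hc'] := gen _ (hlJ (binv b) g Jg).
have hcc : c * c' = 1.
  apply: esym; apply: eqz; rewrite z1 -zM.
  have h1 := cg_lam b hlI hc'.
  rewrite lamV' zlam in h1.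
  apply: (cg_trans hI (cg_sym hI h1)); apply: zcg; exact: (cg_sym hI hc).
have hlz : forall k, cg I (zmul g (c * k)) (blambda b (zmul g k)).
  move=> k; rewrite zlam -zM; exact: zcg.
case: (int_unit hcc) => ec; [left | right].
  move=> z Jz; have [k hk] := gen z Jz.
  have h1 := cg_lam b hlI hk.
  apply: (cg_trans hI (cg_sym hI hk)); apply: (cg_trans hI _ h1).
  by have := hlz k; rewrite ec mul1r.
move=> z Jz Kz; have [k hk] := gen z Jz.
have h1 := cg_lam b hlI hk.
have h2 := hlz k; rewrite ec mulN1r in h2.
have h3 : cg I (zmul g (- k)) (zmul g k).
  apply: (cg_trans hI h2); apply: (cg_trans hI h1).
  apply: (cg_sym hI); exact: (cg_trans hI hk Kz).
have ek : k = 0.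
  have := eqz _ _ h3; lia.
apply: (proj1 (cg0 I z)); apply: (cg_trans hI _ hk); rewrite ek; exact: (cg_refl hI).
Qed.
End Zm.
Lemma factor_A1 (B : brace) (I J : B -> Prop) : left_nilpotent B -> is_ideal I -> is_ideal J ->
  (forall x, I x -> J x) ->
  ((factor_inf_cyclic I J /\ factor_in_socle I J) \/ factor_prime_order I J) ->
  forall b x, J x -> cg I x (blambda b x).
Proof.
move=> ln /ideal_nsub [hI hlI] /ideal_nsub [hJ hlJ] IJ hfac b.
have Jst : forall z, J z -> J (bstar b z).
  by move=> z Jz; apply: (ND hJ (hlJ b z Jz) (NN hJ Jz)).
have dich : (forall z, J z -> cg I z (blambda b z)) \/
            (forall z, J z -> cg I z (blambda b z) -> I z).
  case: hfac => [[hcyc _]|[p [pp [f [fJ finj fcov]]]]].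
    exact: cyc_dich.
  apply: (prime_dich hI hJ pp fJ finj fcov).
  - by rewrite lam0; apply: (cg_refl hI).
  - by move=> x y hx hy; rewrite lamD; apply: (cgD hI).
  - by move=> x Ix; rewrite /cg; apply: (ND hI); [apply: (NN hI) | apply: hlI].
case: dich => [h|h]; first exact: h.
exact: chain.
Qed.

Theorem theorem3p32 (B : brace) :
  supersoluble B ->
  left_nilpotent B ->
  (exists n : nat, forall a : B, ker_lambda a -> zcent n a) ->
  mul_nilpotent B.
Proof.
move=> [n [I [h0 hn hid hmono hfac]]] ln [N hN].
apply: (assembly h0 hn hid _ hN).
move=> b i hi x; rewrite addn1 => Ix.
rewrite addn1 in hi.
apply: (factor_A1 ln (hid i (ltnW hi)) (hid i.+1 hi)) => //.
- by move=> y; apply: hmono.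
- by apply: hfac.
Qed.
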